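(* Let $R$ be a number ring. Assume that for every maximal ideal $\mathfrak p$ of $R$ we have $N(\mathfrak p^2)\leq N(\mathfrak p)^2$. Then $R$ is a Dedekind domain.
   Context: A number ring is a subring of a number field (a finite extension of $\mathbb{Q}$). For a non-zero ideal $I$ of $R$, $N(I)=[R:I]$ is its index as an additive subgroup. *)

(* Defs.v *)
(* A number field is modelled as K : fieldExtType rat
   (a finite-dimensional field extension of Q); a number ring is a
   subring R of K, given as a Prop-valued predicate on K. *)
From HB Require Import structures.
From mathcomp Require Import all_boot all_order all_algebra all_field.
Set Implicit Arguments. Unset Strict Implicit. Unset Printing Implicit Defensive.
Import GRing.Theory.
Local Open Scope ring_scope.

Section NumberRing.
Variable K : fieldType.

Definition is_subring (R : K -> Prop) : Prop :=
  R 1 /\ (forall x y, R x -> R y -> R (x - y)) /\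
  (forall x y, R x -> R y -> R (x * y)).

Definition is_ideal (R I : K -> Prop) : Prop :=
  (forall x, I x -> R x) /\ I 0 /\
  (forall x y, I x -> I y -> I (x - y)) /\
  (forall r x, R r -> I x -> I (r * x)).

Definition maximal_ideal (R I : K -> Prop) : Prop :=
  is_ideal R I /\ ~ I 1 /\
  forall J, is_ideal R J -> (forall x, I x -> J x) ->
    (forall x, J x <-> I x) \/ J 1.

Definition prime_ideal (R I : K -> Prop) : Prop :=
  is_ideal R I /\ ~ I 1 /\
  forall a b, R a -> R b -> I (a * b) -> I a \/ I b.

Definition ideal_mul (I J : K -> Prop) : K -> Prop :=
  fun x => exists s : seq (K * K),
    (forall ab, ab \in s -> I ab.1 /\ J ab.2) /\
    x = \sum_(ab <- s) ab.1 * ab.2.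

(* ideal_index R I n : the additive index [R : I] is finite and equals n,
   i.e. there are n representatives in R of the cosets of I, each element
   of R being congruent mod I to exactly one of them. *)
Definition ideal_index (R I : K -> Prop) (n : nat) : Prop :=
  exists f : 'I_n -> K, (forall i, R (f i)) /\
    forall x, R x -> exists! i : 'I_n, I (x - f i).

(* Dedekind domain: Noetherian, integrally closed, every nonzero prime
   ideal is maximal. (R is a domain, being a subring of a field.) *)
Definition noetherian_ring (R : K -> Prop) : Prop :=
  forall I, is_ideal R I -> exists s : seq K,
    (forall a, a \in s -> R a) /\
    forall x, I x <-> exists c : 'I_(size s) -> K,
      (forall i, R (c i)) /\ x = \sum_(i < size s) c i * s`_i.

Definition in_frac_field (R : K -> Prop) (x : K) : Prop :=
  exists a b, R a /\ R b /\ b != 0 /\ x = a / b.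

Definition integral_over (R : K -> Prop) (x : K) : Prop :=
  exists p : {poly K}, p \is monic /\ (forall i, R p`_i) /\ root p x.

Definition integrally_closed (R : K -> Prop) : Prop :=
  forall x, in_frac_field R x -> integral_over R x -> R x.

Definition dedekind_domain (R : K -> Prop) : Prop :=
  noetherian_ring R /\ integrally_closed R /\
  forall P, prime_ideal R P -> (exists x, P x /\ x != 0) -> maximal_ideal R P.

End NumberRing.

(* Main.v *)
Require Import Defs.
From HB Require Import structures.
From mathcomp Require Import all_boot all_order all_algebra all_field.
From Stdlib Require Import ClassicalEpsilon Classical.
From mathcomp Require Import ring.
Set Implicit Arguments. Unset Strict Implicit. Unset Printing Implicit Defensive.
Import GRing.Theory Num.Theory.
Local Open Scope ring_scope.

Definition dec (P : Prop) : bool := if excluded_middle_informative P then true else false.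
Lemma decP (P : Prop) : reflect P (dec P).
Proof. rewrite /dec; case: excluded_middle_informative => H; by constructor. Qed.

Lemma count_strict (T : eqType) (a b : pred T) (s : seq T) :
  (forall x, a x -> b x) -> (exists x, x \in s /\ b x /\ ~~ a x) ->
  (count a s < count b s)%N.
Proof.
move=> ab [x [xs [bx ax]]]; elim: s xs => //= y s IH.
have aby : (a y <= b y)%N by case: (a y) (ab y) => // ->.
rewrite in_cons; case/orP=> [/eqP <-|/IH H].
  rewrite bx (negbTE ax) /= add0n add1n ltnS; exact: sub_count.
by rewrite -addnS; apply: leq_add.
Qed.

Section Basics.
Variable K : fieldExtType rat.
Variable R : K -> Prop.
Hypothesis HR : is_subring R.

Lemma R1 : R 1. Proof. by case: HR. Qed.
Lemma RB x y : R x -> R y -> R (x - y). Proof. by case: HR => _ [H _]; apply: H. Qed.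
Lemma RM x y : R x -> R y -> R (x * y). Proof. by case: HR => _ [_ H]; apply: H. Qed.
Lemma R0 : R 0. Proof. by rewrite -(subrr (1 : K)); apply: RB; apply: R1. Qed.
Lemma RN x : R x -> R (- x). Proof. by move=> Hx; rewrite -sub0r; apply: RB => //; apply: R0. Qed.
Lemma RD x y : R x -> R y -> R (x + y).
Proof. by move=> Hx Hy; rewrite -[y]opprK; apply: RB => //; apply: RN. Qed.
Lemma Rn n : R n%:R.
Proof. elim: n => [|n IH]; first exact: R0. by rewrite -addn1 natrD; apply: RD => //; apply: R1. Qed.
Lemma Rz (z : int) : R z%:~R.
Proof. case: z => n; first exact: Rn. by rewrite NegzE mulrNz; apply: RN; apply: Rn. Qed.
Lemma RX x n : R x -> R (x ^+ n).
Proof. move=> Hx; elim: n => [|n IH]; first exact: R1. by rewrite exprS; apply: RM. Qed.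
Lemma Rsum (I : Type) (r : seq I) (P : pred I) (F : I -> K) :
  (forall i, P i -> R (F i)) -> R (\sum_(i <- r | P i) F i).
Proof. move=> H; apply: big_ind => //; [exact: R0 | exact: RD]. Qed.

Section Ideal.
Variable I : K -> Prop.
Hypothesis HI : is_ideal R I.
Lemma IR x : I x -> R x. Proof. by case: HI => H _; apply: H. Qed.
Lemma I0 : I 0. Proof. by case: HI => _ [H _]. Qed.
Lemma IB x y : I x -> I y -> I (x - y). Proof. by case: HI => _ [_ [H _]]; apply: H. Qed.
Lemma IM r x : R r -> I x -> I (r * x). Proof. by case: HI => _ [_ [_ H]]; apply: H. Qed.
Lemma IMr r x : R r -> I x -> I (x * r). Proof. by move=> *; rewrite mulrC; apply: IM. Qed.
Lemma IN x : I x -> I (- x). Proof. by move=> Hx; rewrite -sub0r; apply: IB => //; apply: I0. Qed.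
Lemma ID x y : I x -> I y -> I (x + y).
Proof. by move=> Hx Hy; rewrite -[y]opprK; apply: IB => //; apply: IN. Qed.
Lemma Isum (J : Type) (r : seq J) (P : pred J) (F : J -> K) :
  (forall i, P i -> I (F i)) -> I (\sum_(i <- r | P i) F i).
Proof. move=> H; apply: big_ind => //; [exact: I0 | exact: ID]. Qed.
End Ideal.



Lemma natK_neq0 (n : nat) : (0 < n)%N -> (n%:R : K) != 0.
Proof.
move=> n0; have -> : (n%:R : K) = (n%:R : rat) *: 1 by rewrite scaler_nat.
by rewrite scaler_eq0 oner_eq0 orbF pnatr_eq0 -lt0n.
Qed.

Lemma intK_eq (z : int) (x : K) : z%:~R * x = (z%:~R : rat) *: x.
Proof. by rewrite scaler_int mulrzl. Qed.

Lemma rat_rel (n : nat) (v : nat -> K) : (\dim (fullv : {vspace K}) < n)%N ->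
  exists k : nat -> rat, (exists2 i, (i < n)%N & k i != 0) /\
    \sum_(i < n) k i *: v i = 0.
Proof.
move=> dn; set s := mkseq v n.
have nf : ~~ free s.
  apply/negP => /eqP fs; move: (dimvS (subvf <<s>>)); rewrite fs size_mkseq.
  by rewrite leqNgt dn.
apply: NNPP => H; move/negP: nf; apply; apply/freeP => k Hk i.
apply: NNPP => Hi; apply: H.
exists (fun j => if (insub j : option 'I_n) is Some j' then k j' else 0).
split.
  by exists i; [rewrite ltn_ord | rewrite valK; apply/eqP].
rewrite -[X in _ = X]Hk; apply: eq_bigr => j _; rewrite valK; congr (_ *: _).
by rewrite /= (nth_map 0%N) ?size_iota // nth_iota.
Qed.

Lemma int_rel0 (n : nat) (v : nat -> K) : (\dim (fullv : {vspace K}) < n)%N ->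
  exists c : nat -> int, (exists2 i, (i < n)%N & c i != 0) /\
    \sum_(i < n) (c i)%:~R * v i = 0.
Proof.
move=> dn; have [k [[i0 i0n ki0] Hk]] := rat_rel v dn.
pose D := \prod_(i < n) denq (k i).
exists (fun i => numq (k i) * \prod_(j < n | (j : nat) != i) denq (k j)).
have cE : forall i, (i < n)%N ->
   ((numq (k i) * \prod_(j < n | (j : nat) != i) denq (k j))%:~R : rat) = k i * D%:~R.
  move=> i ilt; rewrite intrM numqE -mulrA -intrM /D [in RHS](bigD1 (Ordinal ilt)) //=.
split.
  exists i0 => //; rewrite -(intr_eq0 rat) cE // mulf_eq0 negb_or ki0 /=.
  rewrite intr_eq0 /D prodf_seq_neq0; apply/allP => j _; exact: denq_neq0.
transitivity (\sum_(i < n) (D%:~R : rat) *: (k i *: v i)).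
  apply: eq_bigr => i _; rewrite intK_eq cE // scalerA mulrC //.
by rewrite -scaler_sumr Hk scaler0.
Qed.

Lemma int_rel (p n : nat) (v : nat -> K) : prime p ->
  (\dim (fullv : {vspace K}) < n)%N ->
  exists c : nat -> int, (exists2 i, (i < n)%N & ~~ (p%:Z %| c i)%Z) /\
    \sum_(i < n) (c i)%:~R * v i = 0.
Proof.
move=> pp dn; have ex := int_rel0 v dn.
pose Q m := dec (exists c : nat -> int, (exists2 i, (i < n)%N & c i != 0) /\
    \sum_(i < n) (c i)%:~R * v i = 0 /\ (\sum_(i < n) `|c i|)%N = m).
have exQ : exists m, Q m.
  by case: ex => c [H1 H2]; exists (\sum_(i < n) `|c i|)%N; apply/decP; exists c.
case: (ex_minnP exQ) => m /decP [c [[i0 i0n ci0] [Hc Hm]]] minm.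
exists c; split => //.
apply: NNPP => Hd.
have dv : forall i, (i < n)%N -> (p%:Z %| c i)%Z.
  by move=> i ilt; apply: NNPP => Hi; apply: Hd; exists i => //; apply/negP.
pose c' i := (c i %/ p%:Z)%Z.
have cc : forall i, (i < n)%N -> c i = c' i * p%:Z by move=> i ilt; rewrite divzK // dv.
have p0 : (0 < p)%N by exact: prime_gt0.
have : (m <= \sum_(i < n) `|c' i|)%N.
  apply: minm; apply/decP; exists c'; split; last split => //.
  - exists i0 => //; apply: contra ci0 => /eqP c0; by rewrite cc // c0 mul0r.
  - apply/eqP; rewrite -(mulrI_eq0 _ (lregP (natK_neq0 p0))); apply/eqP.
    rewrite mulr_sumr -[X in _ = X]Hc; apply: eq_bigr => i _; rewrite cc // intrM.
    by rewrite [_ * (p%:Z)%:~R]mulrC -mulrA mulrA.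
rewrite -Hm; apply/negP; rewrite -ltnNge.
have -> : (\sum_(i < n) `|c i|)%N = (\sum_(i < n) `|c' i| * p)%N.
  by apply: eq_bigr => i _; rewrite cc // abszM.
rewrite -big_distrl /=.
have pos : (0 < \sum_(i < n) `|c' i|)%N.
  rewrite (bigD1 (Ordinal i0n)) //= ltn_addr // absz_gt0.
  apply: contra ci0 => /eqP c0; by rewrite cc // c0 mul0r.
by rewrite -{1}(muln1 (\sum_(i < n) `|c' i|)%N) ltn_pmul2l // prime_gt1.
Qed.


Notation dK := (\dim (fullv : {vspace K})).

Definition cong (c x y : K) := exists z, R z /\ x = y + c * z.

Fixpoint combos (p : nat) (g : seq K) : seq K :=
  if g is a :: g' then [seq (j%:R * a + y) | j <- iota 0 p, y <- combos p g'] else [:: 0].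

Lemma combos_R p g : (forall x, x \in g -> R x) -> forall l, l \in combos p g -> R l.
Proof.
elim: g => [|a g IH] /= Hg l.
  by rewrite inE => /eqP ->; apply: R0.
case/allpairsP => [[j y] [_ /= yc ->]]; apply: RD => //.
  by apply: RM => //; [apply: Rn | apply: Hg; rewrite inE eqxx].
by apply: IH yc => x xg; apply: Hg; rewrite inE xg orbT.
Qed.

Lemma combos_cover p g : (0 < p)%N -> (forall x, x \in g -> R x) -> forall e : nat -> nat,
  exists l, l \in combos p g /\ cong p%:R (\sum_(i < size g) (e i)%:R * g`_i) l.
Proof.
move=> p0; elim: g => [|a g IH] Hg e /=.
  by exists 0; split; [rewrite inE | exists 0; split; [apply: R0 | rewrite big_ord0 mulr0 addr0]].
have Ha : R a by apply: Hg; rewrite inE eqxx.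
have [l [lc [z [Rz Hz]]]] := IH (fun x xg => Hg x (ltac:(by rewrite inE xg orbT))) (fun i => e i.+1).
exists ((e 0 %% p)%N%:R * a + l); split.
  by apply: allpairs_f => //; rewrite mem_iota add0n ltn_mod p0.
exists ((e 0 %/ p)%N%:R * a + z); split; first by apply: RD => //; apply: RM => //; apply: Rn.
rewrite big_ord_recl /= Hz {1}(divn_eq (e 0) p) natrD natrM.
rewrite mulrDl mulrDr !mulrA [p%:R * _]mulrC.
ring.
Qed.

Definition indep (p : nat) (g : seq K) := forall c : nat -> nat,
  (forall i, (i < size g)%N -> (c i < p)%N) ->
  (exists z, R z /\ \sum_(i < size g) (c i)%:R * g`_i = p%:R * z) ->
  forall i, (i < size g)%N -> c i = 0%N.

Lemma indep_size p g : prime p -> (forall x, x \in g -> R x) -> indep p g -> (size g <= dK)%N.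
Proof.
move=> pp Hg Hi; rewrite leqNgt; apply/negP => sz.
have [c [[i0 i0s i0d] Hc]] := int_rel (fun i => g`_i) pp sz.
have p0 : (0 < p)%N := prime_gt0 pp.
have pz : (p%:Z != 0) by rewrite eqz_nat -lt0n.
pose c' i := `|(c i %% p%:Z)%Z|%N.
have c'E : forall i, (c' i)%:Z = (c i %% p%:Z)%Z by move=> i; rewrite /c' gez0_abs // modz_ge0.
have := Hi c'.
have H1 : forall i, (i < size g)%N -> (c' i < p)%N.
  by move=> i _; rewrite -ltz_nat c'E ltz_pmod // ltz_nat.
move/(_ H1) => H2.
have : c' i0 = 0%N.
  apply: H2 => //; exists (- \sum_(i < size g) ((c i %/ p%:Z)%Z)%:~R * g`_i); split.
    by apply: RN; apply: Rsum => i _; apply: RM; [apply: Rz | apply: Hg; exact: mem_nth (ltn_ord i)].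
  transitivity (\sum_(i < size g) (c i)%:~R * g`_i - p%:R * \sum_(i < size g) ((c i %/ p%:Z)%Z)%:~R * g`_i); last by rewrite Hc sub0r mulrN.
  rewrite mulr_sumr -sumrB; apply: eq_bigr => i _.
  have -> : ((c' i)%:R : K) = ((c' i)%:Z)%:~R by [].
  have hr : (c i %% p%:Z)%Z = c i - (c i %/ p%:Z)%Z * p%:Z.
    by rewrite {2}(divz_eq (c i) p%:Z) [_ + (_ %% _)%Z]addrC addrK.
  rewrite c'E hr intrB intrM; have -> : ((p%:Z)%:~R : K) = p%:R by []. ring.
move=> /(congr1 (fun n : nat => n%:Z)); rewrite c'E => /eqP.
move/eqP/dvdz_mod0P => H; by rewrite H in i0d.
Qed.


Lemma modp_fin p : prime p -> exists L : seq K, (forall l, l \in L -> R l) /\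
  forall x, R x -> exists l, l \in L /\ cong p%:R x l.
Proof.
move=> pp; have p0 := prime_gt0 pp.
pose Q k := dec (exists g : seq K, size g = k /\ (forall x, x \in g -> R x) /\ indep p g).
have ex0 : exists k, Q k.
  by exists 0%N; apply/decP; exists [::]; split => //; split => // c _ _ i.
have ub : forall k, Q k -> (k <= dK)%N.
  move=> k /decP [g [sg [Hg Hi]]]; rewrite -sg; exact: (indep_size pp Hg Hi).
case: (ex_maxnP ex0 ub) => k /decP [g [sg [Hg Hi]]] maxk.
exists (combos p g); split; first exact: combos_R.
move=> x Rx.
have nind : ~ indep p (rcons g x).
  move=> Hx; suff: (k.+1 <= k)%N by rewrite ltnn.
  apply: maxk; apply/decP; exists (rcons g x); split; first by rewrite size_rcons sg.
  split => // y; rewrite mem_rcons inE => /orP [/eqP -> //|]; exact: Hg.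
have [c [cb [[z [Rz Hz]] [i0 [i0s ci0]]]]] : exists c : nat -> nat,
   (forall i, (i < size (rcons g x))%N -> (c i < p)%N) /\
   (exists z, R z /\ \sum_(i < size (rcons g x)) (c i)%:R * (rcons g x)`_i = p%:R * z) /\
   exists i, (i < size (rcons g x))%N /\ c i <> 0%N.
  apply: NNPP => H; apply: nind => c cb hs i isz; apply: NNPP => ci; apply: H.
  by exists c; do 2 split => //; exists i.
have Hs : \sum_(i < size g) (c i)%:R * g`_i + (c (size g))%:R * x = p%:R * z.
  rewrite -Hz size_rcons big_ord_recr /=; congr (_ + _).
    by apply: eq_bigr => i _; rewrite nth_rcons ltn_ord.
  by rewrite nth_rcons ltnn eqxx.
have cb' : forall i, (i < size g)%N -> (c i < p)%N.
  by move=> i ii; apply: cb; rewrite size_rcons ltnS ltnW.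
case ck: (c (size g)) => [|ck'].
  exfalso; move: Hs; rewrite ck mul0r addr0 => Hs.
  have := Hi c cb' (ex_intro _ z (conj Rz Hs)).
  move: i0s; rewrite size_rcons ltnS leq_eqVlt => /orP [/eqP ei|ii] H.
    by apply: ci0; rewrite ei.
  by apply: ci0; apply: H.
have ckp : (ck'.+1 < p)%N by rewrite -ck; apply: cb; rewrite size_rcons ltnSn.
have [a _ Ha] := Bezoutl ck'.+1 p0.
have cop : gcdn p ck'.+1 = 1%N.
  apply/eqP; rewrite -/(coprime _ _) prime_coprime //; apply/negP => /dvdn_leq.
  by move/(_ isT); rewrite leqNgt ckp.
rewrite cop in Ha.
have [l [lc [w [Rw Hw]]]] := combos_cover p0 Hg (fun i => a * c i)%N.
exists l; split => //.
exists (w + ((1 + a * ck'.+1) %/ p)%N%:R * x - a%:R * z); split.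
  apply: RB; [apply: RD => //; apply: RM => //; apply: Rn | apply: RM => //; apply: Rn].
have e1 : ((1 + a * ck'.+1)%N%:R : K) = ((1 + a * ck'.+1) %/ p)%N%:R * p%:R.
  by rewrite -natrM divnK.
have eS : \sum_(i < size g) ((a * c i)%N)%:R * g`_i = a%:R * \sum_(i < size g) (c i)%:R * g`_i.
  by rewrite mulr_sumr; apply: eq_bigr => i _; rewrite natrM mulrA.
rewrite eS in Hw.
have ex : x = (1 + a * ck'.+1)%N%:R * x - a%:R * ((ck'.+1)%:R * x).
  by rewrite natrD natrM; ring.
rewrite {1}ex e1.
have -> : (ck'.+1)%:R * x = p%:R * z - \sum_(i < size g) (c i)%:R * g`_i.
  by rewrite -Hs ck; ring.
rewrite mulrBr Hw; ring.
Qed.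

Lemma modc_fin c : (0 < c)%N -> exists L : seq K, (forall l, l \in L -> R l) /\
  forall x, R x -> exists l, l \in L /\ cong c%:R x l.
Proof.
elim/ltn_ind: c => c IH c0.
case: (ltngtP c 1) => [|c1|->].
- by rewrite ltnS leqn0 => /eqP c00; rewrite c00 in c0.
- have pp := pdiv_prime c1; have p0 := prime_gt0 pp.
  have [L1 [HL1 C1]] := modp_fin pp.
  have cE : c = (pdiv c * (c %/ pdiv c))%N by rewrite mulnC divnK // pdiv_dvd.
  have c'0 : (0 < c %/ pdiv c)%N by rewrite divn_gt0 // dvdn_leq // pdiv_dvd.
  have [L2 [HL2 C2]] := IH _ (ltn_Pdiv (prime_gt1 pp) c0) c'0.
  exists [seq l1 + (pdiv c)%:R * l2 | l1 <- L1, l2 <- L2]; split.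
    move=> l /allpairsP [[l1 l2] [/= i1 i2 ->]].
    by apply: RD; [apply: HL1 | apply: RM; [apply: Rn | apply: HL2]].
  move=> x Rx; have [l1 [i1 [z1 [Rz1 H1]]]] := C1 x Rx.
  have [l2 [i2 [z2 [Rz2 H2]]]] := C2 z1 Rz1.
  exists (l1 + (pdiv c)%:R * l2); split; first by apply: allpairs_f.
  have cE1 : (c%:R : K) = (pdiv c)%:R * (c %/ pdiv c)%:R by rewrite -natrM -cE.
  exists z2; split => //; rewrite H1 H2 cE1; ring.
- exists [:: 0]; split; first by move=> l; rewrite inE => /eqP ->; apply: R0.
  move=> x Rx; exists 0; split; first by rewrite inE.
  by exists x; split => //; rewrite add0r mul1r.
Qed.

Lemma horner_split (n : nat) (c : nat -> int) (y : K) :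
  \sum_(i < n.+1) (c i)%:~R * y ^+ i =
  (c 0%N)%:~R + y * \sum_(i < n) (c i.+1)%:~R * y ^+ i.
Proof.
rewrite big_ord_recl expr0 mulr1 mulr_sumr; congr (_ + _).
by apply: eq_bigr => i _; rewrite /= exprS; ring.
Qed.

Lemma divides_int_aux (y : K) : R y -> y != 0 -> forall n (c : nat -> int),
  (exists2 i, (i < n)%N & c i != 0) -> \sum_(i < n) (c i)%:~R * y ^+ i = 0 ->
  exists a : int, a != 0 /\ exists z, R z /\ a%:~R = y * z.
Proof.
move=> Ry y0; elim=> [|n IH] c [i0 i0n ci0] Hs; first by [].
move: Hs; rewrite horner_split.
have RS : R (\sum_(i < n) (c i.+1)%:~R * y ^+ i).
  by apply: Rsum => i _; apply: RM; [apply: Rz | apply: RX].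
case c0: (c 0%N == 0).
  rewrite (eqP c0) add0r => /eqP; rewrite mulf_eq0 (negbTE y0) /= => /eqP Hs.
  apply: (IH (fun i => c i.+1)) Hs; case: i0 i0n ci0 => [|i] i0n ci0.
    by rewrite (eqP c0) in ci0.
  by exists i.
move=> Hs; exists (c 0%N); split; first by rewrite c0.
exists (- \sum_(i < n) (c i.+1)%:~R * y ^+ i); split; first by apply: RN.
by rewrite mulrN; apply/eqP; rewrite -addr_eq0 Hs.
Qed.

Lemma divides_nat (y : K) : R y -> y != 0 ->
  exists c : nat, (0 < c)%N /\ exists z, R z /\ c%:R = y * z.
Proof.
move=> Ry y0.
have [c [[i0 i0n i0d] Hc]] := int_rel (fun i => y ^+ i) (pdiv_prime (isT : (1 < 2)%N)) (ltnSn dK).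
have nz : exists2 i, (i < dK.+1)%N & c i != 0.
  by exists i0 => //; apply: contra i0d => /eqP ->; rewrite dvdz0.
have [a [a0 [z [Rz Hz]]]] := divides_int_aux Ry y0 nz Hc.
case: a a0 Hz => n a0 Hz.
  by exists n; split; [rewrite lt0n | exists z].
exists n.+1; split => //; exists (- z); split; first exact: RN.
by rewrite mulrN -Hz NegzE mulrNz opprK.
Qed.

Section PrimeI.
Variable P : K -> Prop.
Hypothesis HP : prime_ideal R P.
Lemma PI : is_ideal R P. Proof. by case: HP. Qed.
Lemma P1 : ~ P 1. Proof. by case: HP => _ []. Qed.
Lemma Pprime a b : R a -> R b -> P (a * b) -> P a \/ P b.
Proof. by case: HP => _ [_ H]; apply: H. Qed.

Lemma prime_in_P c : (0 < c)%N -> P c%:R -> exists p, prime p /\ P p%:R.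
Proof.
elim/ltn_ind: c => c IH c0 Pc.
case: (ltngtP c 1) => [|c1|c1].
- by rewrite ltnS leqn0 => /eqP c00; rewrite c00 in c0.
- have pp := pdiv_prime c1.
  have cE : (c%:R : K) = (pdiv c)%:R * (c %/ pdiv c)%:R by rewrite -natrM mulnC divnK // pdiv_dvd.
  rewrite cE in Pc; case: (Pprime (Rn _) (Rn _) Pc) => H; first by exists (pdiv c).
  apply: (IH _ (ltn_Pdiv (prime_gt1 pp) c0)) => //.
  by rewrite divn_gt0 // dvdn_leq // pdiv_dvd.
- by exfalso; apply: P1; rewrite c1 in Pc.
Qed.

Lemma dim1_core p (y : K) : prime p -> P p%:R -> R y -> ~ P y ->
  forall n (c : nat -> int), (exists2 i, (i < n)%N & ~~ (p%:Z %| c i)%Z) ->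
  P (\sum_(i < n) (c i)%:~R * y ^+ i) -> exists z, R z /\ P (1 - y * z).
Proof.
move=> pp Pp Ry Py; elim=> [|n IH] c [i0 i0n ci0] //.
rewrite horner_split => Hs.
have RS : R (\sum_(i < n) (c i.+1)%:~R * y ^+ i).
  by apply: Rsum => i _; apply: RM; [apply: Rz | apply: RX].
case d0: (p%:Z %| c 0%N)%Z.
  have Pc0 : P (c 0%N)%:~R.
    rewrite -(divzK d0) intrM; apply: (IM PI); [exact: Rz | exact: Pp].
  have : P (y * \sum_(i < n) (c i.+1)%:~R * y ^+ i).
    by rewrite -(addKr (c 0%N)%:~R (y * _)); apply: (ID PI) => //; apply: (IN PI).
  case/(Pprime Ry RS) => // PS.
  apply: (IH (fun i => c i.+1)) PS; case: i0 i0n ci0 => [|i] i0n ci0.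
    by rewrite d0 in ci0.
  by exists i.
have [u [v Huv]] := Bezoutz (c 0%N) p%:Z.
have g1 : gcdz (c 0%N) p%:Z = 1.
  rewrite /gcdz /=; apply/eqP; rewrite eqz_nat; apply/eqP.
  have : coprime p `|c 0%N| by rewrite prime_coprime //; move: d0; rewrite dvdzE /= => ->.
  by rewrite coprime_sym => /eqP.
rewrite g1 in Huv.
exists (- (u%:~R * \sum_(i < n) (c i.+1)%:~R * y ^+ i)); split.
  by apply: RN; apply: RM => //; apply: Rz.
have -> : 1 - y * - (u%:~R * \sum_(i < n) (c i.+1)%:~R * y ^+ i) =
   u%:~R * ((c 0%N)%:~R + y * \sum_(i < n) (c i.+1)%:~R * y ^+ i) + v%:~R * p%:R.
  have key : forall U C V Q S Y : K, U * C + V * Q = 1 -> 1 - Y * - (U * S) = U * (C + Y * S) + V * Q.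
    by move=> U C V Q S Y e; rewrite -e; ring.
  apply: key; have -> : (p%:R : K) = (p%:Z)%:~R by []. by rewrite -!intrM -intrD Huv.
by apply: (ID PI); apply: (IM PI) => //; apply: Rz.
Qed.

Lemma prime_maximal : (exists x, P x /\ x != 0) -> maximal_ideal R P.
Proof.
move=> [x [Px x0]].
have [c [c0 [z [Rz Hz]]]] := divides_nat (IR PI Px) x0.
have [p [pp Pp]] : exists p, prime p /\ P p%:R.
  apply: (prime_in_P c0); rewrite Hz mulrC; apply: (IM PI) => //.
split; first exact: PI. split; first exact: P1.
move=> J HJ sub.
case: (classic (exists y, J y /\ ~ P y)) => [[y [Jy Py]]|H]; last first.
  left => w; split; last exact: sub.
  by move=> Jw; apply: NNPP => Pw; apply: H; exists w.
right; have Ry := IR HJ Jy.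
have [cc [Hi Hc]] := int_rel (fun i => y ^+ i) pp (ltnSn dK).
have [w [Rw Pw]] := dim1_core pp Pp Ry Py Hi (ltac:(rewrite Hc; exact: (I0 PI))).
rewrite -(subrK (y * w) 1); apply: (ID HJ); first by apply: sub.
by apply: (IMr HJ).
Qed.
End PrimeI.

Lemma ideal_int (I : K -> Prop) : is_ideal R I -> forall y, I y -> y != 0 ->
  exists c : nat, (0 < c)%N /\ I c%:R.
Proof.
move=> HI y Iy y0; have [c [c0 [z [Rz Hz]]]] := divides_nat (IR HI Iy) y0.
by exists c; split => //; rewrite Hz; apply: (IMr HI).
Qed.

Lemma noeth_strong I : is_ideal R I -> exists s : seq K, (forall a, a \in s -> I a) /\
    forall x, I x <-> exists c : 'I_(size s) -> K,
      (forall i, R (c i)) /\ x = \sum_(i < size s) c i * s`_i.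
Proof.
move=> HI.
case: (classic (exists y, I y /\ y != 0)) => [[y [Iy y0]] | H]; last first.
  exists [::]; split => [a|x]; first by rewrite in_nil.
  split => [Ix|[cf [_ ->]]]; last by rewrite big_ord0; apply: (I0 HI).
  exists (fun _ => 0); split => [_|]; first exact: R0.
  rewrite big_ord0; apply/eqP; apply: NNPP => /negP x0; apply: H; exists x; split => //.
have [c [c0 Ic]] := ideal_int HI Iy y0.
have [L [HL C]] := modc_fin c0.
have [ch Hch] : exists ch : K -> K, forall l, I (ch l) /\
    ((exists x, I x /\ cong c%:R x l) -> cong c%:R (ch l) l).
  apply: (ClassicalEpsilon.choice (fun l w => I w /\ ((exists x, I x /\ cong c%:R x l) -> cong c%:R w l))) => l.
  case: (classic (exists x, I x /\ cong c%:R x l)) => [[x [Ix Hx]]|Hn].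
    by exists x.
  by exists 0; split => //; apply: (I0 HI).
have Is : forall a, a \in c%:R :: map ch L -> I a.
  move=> a; rewrite inE => /orP [/eqP ->//|/mapP [l _ ->]]; exact: (Hch l).1.
exists (c%:R :: map ch L); split; first by [].
move=> x; split; last first.
  move=> [cf [Rcf ->]]; apply: (Isum HI) => i _; apply: (IM HI) => //.
  by apply: Is; apply: mem_nth.
move=> Ix; have [l [lL [z1 [Rz1 Hx]]]] := C x (IR HI Ix).
have [z2 [Rz2 Hl]] := (Hch l).2 (ex_intro _ x (conj Ix (ex_intro _ z1 (conj Rz1 Hx)))).
have ilt : (index l L < size (map ch L))%N by rewrite size_map index_mem.
exists (fun i : 'I_(size (c%:R :: map ch L)) => if (i : nat) == 0%N then z1 - z2
   else if (i : nat) == (index l L).+1 then 1 else 0); split.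
  move=> i; case: ifP => _; first by apply: RB.
  by case: ifP => _; [apply: R1 | apply: R0].
rewrite big_ord_recl /= (bigD1 (Ordinal ilt)) //= eqxx mul1r big1 ?addr0.
  by rewrite (nth_map 0) ?index_mem // nth_index // Hx Hl; ring.
by move=> j nj; rewrite /bump add1n eqSS; move: nj; rewrite -val_eqE /= => /negbTE ->; rewrite mul0r.
Qed.

Lemma noeth : noetherian_ring R.
Proof.
move=> I HI; have [s [Is H]] := noeth_strong HI; exists s; split => //.
by move=> a /Is /(IR HI).
Qed.

Section Mul.
Variables I J : K -> Prop.
Hypothesis HI : is_ideal R I.
Hypothesis HJ : is_ideal R J.

Lemma mul_in a b : I a -> J b -> ideal_mul I J (a * b).
Proof. by move=> Ia Jb; exists [:: (a, b)]; split; [move=> ab; rewrite inE => /eqP -> | rewrite big_seq1]. Qed.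

Lemma mul_ideal : is_ideal R (ideal_mul I J).
Proof.
split; [|split; [|split]].
- move=> x [s [Hs ->]]; rewrite big_seq; apply: Rsum => ab abs.
  by have [h1 h2] := Hs ab abs; exact: RM (IR HI h1) (IR HJ h2).
- by exists [::]; rewrite big_nil.
- move=> x y [s [Hs ->]] [t [Ht ->]].
  exists (s ++ [seq (- ab.1, ab.2) | ab <- t]); split.
    move=> ab; rewrite mem_cat => /orP [/Hs //|/mapP [ab' /Ht [H1 H2] ->]] /=.
    by split => //; apply: (IN HI).
  by rewrite big_cat big_map /= (eq_bigr _ (fun i _ => mulNr _ _)) sumrN.
- move=> r x Rr [s [Hs ->]]; exists [seq (r * ab.1, ab.2) | ab <- s]; split.
    move=> ab /mapP [ab' /Hs [H1 H2] ->] /=; split => //; exact: IM.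
  by rewrite big_map mulr_sumr; apply: eq_bigr => i _; rewrite mulrA.
Qed.

Lemma mul_sub : forall x, ideal_mul I J x -> I x.
Proof.
move=> x [s [Hs ->]]; rewrite big_seq; apply: (Isum HI) => ab abs.
by have [h1 h2] := Hs ab abs; exact: (IMr HI (IR HJ h2) h1).
Qed.
End Mul.

Section Max.
Variable P : K -> Prop.
Hypothesis HP : maximal_ideal R P.
Lemma MI : is_ideal R P. Proof. by case: HP. Qed.
Lemma M1 : ~ P 1. Proof. by case: HP => _ []. Qed.

Lemma unit_mod r : R r -> ~ P r -> exists u, R u /\ P (1 - u * r).
Proof.
move=> Rr Pr.
pose J x := exists q u, P q /\ R u /\ x = q + u * r.
have HJ : is_ideal R J.
  split; [|split; [|split]].
  - by move=> x [q [u [Pq [Ru ->]]]]; apply: RD; [exact: (IR MI Pq) | exact: RM].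
  - by exists 0, 0; split; [exact: (I0 MI) | split; [exact: R0 | rewrite mul0r addr0]].
  - move=> x y [q [u [Pq [Ru ->]]]] [q' [u' [Pq' [Ru' ->]]]].
    exists (q - q'), (u - u'); split; first exact: (IB MI).
    by split; [exact: RB | ring].
  - move=> s x Rs [q [u [Pq [Ru ->]]]]; exists (s * q), (s * u); split; first exact: (IM MI).
    by split; [exact: RM | ring].
case: HP => _ [_ H]; case: (H J HJ).
- by move=> x Px; exists x, 0; split => //; split; [exact: R0 | rewrite mul0r addr0].
- move=> E; exfalso; apply: Pr; apply/E; exists 0, 1; split; first exact: (I0 MI).
  by split; [exact: R1 | rewrite add0r mul1r].
- move=> [q [u [Pq [Ru E]]]]; exists u; split => //.
  by have -> : 1 - u * r = q by rewrite E; ring.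
Qed.

Lemma max_prime : prime_ideal R P.
Proof.
split; first exact: MI. split; first exact: M1.
move=> a b Ra Rb Pab; case: (classic (P a)) => Pa; [by left | right].
have [u [Ru Pu]] := unit_mod Ra Pa.
have -> : b = u * (a * b) + (1 - u * a) * b by ring.
by apply: (ID MI); [apply: (IM MI) | apply: (IMr MI)].
Qed.
End Max.

Lemma reps_list (I : K -> Prop) : is_ideal R I -> forall L : seq K,
  exists n (g : nat -> K), (forall i, (i < n)%N -> R (g i)) /\
   (forall i j, (i < n)%N -> (j < n)%N -> I (g i - g j) -> i = j) /\
   (forall l, l \in L -> R l -> exists2 i, (i < n)%N & I (l - g i)).
Proof.
move=> HI; elim=> [|l L [n [g [Rg [Ig Cg]]]]].
  by exists 0%N, (fun _ => 0); split => //; split => // l; rewrite in_nil.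
case: (classic (exists2 i, (i < n)%N & I (l - g i))) => [[i0 i0n Hi0]|Hn].
  exists n, g; split => //; split => // l'; rewrite inE => /orP [/eqP -> _|/Cg //].
  by exists i0.
case: (classic (R l)) => Rl; last first.
  exists n, g; split => //; split => // l'; rewrite inE => /orP [/eqP -> //|/Cg //].
exists n.+1, (fun i => if i == n then l else g i); split; [|split].
- move=> i ilt; case: eqP => [_|ne]; first done; apply: Rg.
  by move: ilt; rewrite ltnS leq_eqVlt => /orP [/eqP|].
- move=> i j ilt jlt.
  have gi : forall k, (k < n)%N -> (if k == n then l else g k) = g k.
    by move=> k klt; rewrite (ltn_eqF klt).
  have hi : i = n \/ (i < n)%N by move: ilt; rewrite ltnS leq_eqVlt => /orP [/eqP|]; auto.
  have hj : j = n \/ (j < n)%N by move: jlt; rewrite ltnS leq_eqVlt => /orP [/eqP|]; auto.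
  case: hi => [ei|{}ilt]; case: hj => [ej|{}jlt].
  + by rewrite ei ej.
  + rewrite ei eqxx (gi j jlt) => Hl; exfalso; apply: Hn; by exists j.
  + rewrite ej eqxx (gi i ilt) => Hl; exfalso; apply: Hn; exists i => //.
    by rewrite -opprB; apply: (IN HI).
  + by rewrite (gi i ilt) (gi j jlt); apply: Ig.
- move=> l'; rewrite inE => /orP [/eqP -> _|/Cg H /H [i ilt Hi]].
    by exists n => //; rewrite eqxx subrr; apply: (I0 HI).
  by exists i; [rewrite ltnS ltnW | rewrite (ltn_eqF ilt)].
Qed.

Lemma index_exists (I : K -> Prop) c : is_ideal R I -> (0 < c)%N -> I c%:R ->
  exists n, ideal_index R I n.
Proof.
move=> HI c0 Ic; have [L [HL C]] := modc_fin c0.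
have [n [g [Rg [Ig Cg]]]] := reps_list HI L.
exists n, (fun i : 'I_n => g i); split; first by move=> i; apply: Rg.
move=> x Rx; have [l [lL [z [Rz Hx]]]] := C x Rx.
have [i ilt Hi] := Cg l lL (HL l lL).
exists (Ordinal ilt); split.
  have -> : x - g i = (l - g i) + c%:R * z by rewrite Hx; ring.
  by apply: (ID HI) => //; apply: (IMr HI).
move=> j Hj; apply: val_inj => /=; apply: Ig => //.
have -> : g i - g j = (x - g j) - (x - g i) by ring.
apply: (IB HI) => //.
have -> : x - g i = (l - g i) + c%:R * z by rewrite Hx; ring.
by apply: (ID HI) => //; apply: (IMr HI).
Qed.

Section Pi.
Variable P : K -> Prop.
Hypothesis HP : maximal_ideal R P.
Hypothesis HN : forall n m : nat, ideal_index R P n ->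
  ideal_index R (ideal_mul P P) m -> (m <= n ^ 2)%N.
Hypothesis Pnz : exists x, P x /\ x != 0.

Let P2 := ideal_mul P P.
Let HP2 : is_ideal R P2 := mul_ideal (MI HP) (MI HP).

Lemma exists_pi : exists pi, P pi /\
  forall y, P y -> exists w, R w /\ P2 (y - pi * w).
Proof.
have PI := MI HP.
apply: NNPP => H.
have H' : forall pi, P pi -> exists y, P y /\ forall w, R w -> ~ P2 (y - pi * w).
  move=> pi Ppi; apply: NNPP => H1; apply: H; exists pi; split => // y Py.
  apply: NNPP => H2; apply: H1; exists y; split => // w Rw H3; apply: H2; by exists w.
have [p1 [Pp1 Hp1]] := H' 0 (I0 PI).
have {}Hp1 : ~ P2 p1 by move=> H2; apply: (Hp1 0 R0); rewrite mul0r subr0.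
have [p2 [Pp2 Hp2]] := H' p1 Pp1.
have [x [Px x0]] := Pnz.
have [c [c0 Pc]] := ideal_int PI Px x0.
have [n [f [Rf Hf]]] := index_exists PI c0 Pc.
have P2c : P2 (c * c)%N%:R by rewrite natrM; apply: mul_in.
have cc0 : (0 < c * c)%N by rewrite muln_gt0 c0.
have [m [f2 [Rf2 Hf2]]] := index_exists HP2 cc0 P2c.
have nm := HN (ex_intro _ f (conj Rf Hf)) (ex_intro _ f2 (conj Rf2 Hf2)).
have uniqP : forall i i', P (f i - f i') -> i = i'.
  move=> i i' Hi; have [i0 [_ U]] := Hf (f i) (Rf i).
  by rewrite -(U i) ?subrr; [apply: U | apply: (I0 PI)].
have n2 : (2 <= n)%N.
  have [i0 [Hi0 _]] := Hf 0 R0; have [i1 [Hi1 _]] := Hf 1 R1.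
  case: n f Rf Hf uniqP nm i0 Hi0 i1 Hi1 => [|[|n]] f Rf Hf uniqP nm i0 Hi0 i1 Hi1 //.
  - by case: i0 Hi0.
  - exfalso; apply: (M1 HP); have e : i0 = i1 by rewrite (ord1 i0) (ord1 i1).
    rewrite -e in Hi1; have -> : (1 : K) = (1 - f i0) - (0 - f i0) by ring.
    exact: (IB PI).
pose e (t : 'I_n * 'I_n * 'I_n) := f t.1.1 + f t.1.2 * p1 + f t.2 * p2.
have Re : forall t, R (e t).
  move=> t; apply: RD; first apply: RD; try apply: RM; try apply: Rf;
  exact: (IR PI).
have [h Hh] : exists h : 'I_n * 'I_n * 'I_n -> 'I_m, forall t, P2 (e t - f2 (h t)).
  apply: (ClassicalEpsilon.choice (fun t i => P2 (e t - f2 i))) => t.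
  by have [i [Hi _]] := Hf2 (e t) (Re t); exists i.
have hinj : injective h.
  move=> [[i j] k] [[i' j'] k'] Ht.
  have E : P2 (e (i, j, k) - e (i', j', k')).
    have -> : e (i, j, k) - e (i', j', k') = (e (i, j, k) - f2 (h (i, j, k))) - (e (i', j', k') - f2 (h (i', j', k'))).
      by rewrite Ht; ring.
    by apply: (IB HP2).
  rewrite /e /= in E.
  have Ei : i = i'.
    apply: uniqP.
    have -> : f i - f i' = (f i + f j * p1 + f k * p2 - (f i' + f j' * p1 + f k' * p2)) - ((f j - f j') * p1 + (f k - f k') * p2) by ring.
    apply: (IB PI); first exact: (mul_sub (MI HP) (MI HP)).
    by apply: (ID PI); apply: (IM PI) => //; apply: RB.
  subst i'.
  have E2 : P2 ((f j - f j') * p1 + (f k - f k') * p2).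
    by move: E; congr P2; ring.
  have Ek : k = k'.
    apply: uniqP; apply: NNPP => Pk.
    have [u [Ru Pu]] := unit_mod HP (RB (Rf k) (Rf k')) Pk.
    apply: (Hp2 (- (u * (f j - f j')))); first by apply: RN; apply: RM => //; apply: RB.
    have -> : p2 - p1 * - (u * (f j - f j')) = u * ((f j - f j') * p1 + (f k - f k') * p2) + (1 - u * (f k - f k')) * p2 by ring.
    by apply: (ID HP2); [apply: (IM HP2) | apply: mul_in].
  subst k'.
  have Ej : j = j'.
    apply: uniqP; apply: NNPP => Pj.
    have [u [Ru Pu]] := unit_mod HP (RB (Rf j) (Rf j')) Pj.
    apply: Hp1.
    have -> : p1 = u * ((f j - f j') * p1 + (f k - f k) * p2) + (1 - u * (f j - f j')) * p1.
      by rewrite subrr mul0r addr0; ring.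
    by apply: (ID HP2); [apply: (IM HP2) | apply: mul_in].
  by rewrite Ej.
have := leq_card h hinj; rewrite !card_prod !card_ord => nnn.
have : (n * n * n <= n * n * 1)%N by rewrite muln1 (leq_trans nnn) // -expnS.
by rewrite leq_pmul2l ?muln_gt0 ?(leq_trans _ n2) // leqNgt (leq_trans _ n2).
Qed.
End Pi.

Section Nak.
Variable P : K -> Prop.
Hypothesis HP : maximal_ideal R P.

Lemma nakayama pi : P pi ->
  (forall y, P y -> exists w, R w /\ ideal_mul P P (y - pi * w)) ->
  exists t, R t /\ ~ P t /\ forall y, P y -> exists w, R w /\ t * y = pi * w.
Proof.
move=> Ppi Hpi; have PI := MI HP; have PP := max_prime HP.
have [g [Pg Hg]] := noeth_strong PI.
have Pg' : forall j, P g`_j.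
  move=> j; case: (ltnP j (size g)) => js; first by apply: Pg; apply: mem_nth.
  by rewrite nth_default //; apply: (I0 PI).
pose Q k := exists t, R t /\ ~ P t /\ forall y, P y -> exists w (h : nat -> K),
  R w /\ (forall j, P (h j)) /\ t * y = pi * w + \sum_(j < k) h j * g`_j.
have span : forall z, ideal_mul P P z -> exists h : nat -> K, (forall j, P (h j)) /\
    z = \sum_(j < size g) h j * g`_j.
  move=> z [s [Hs ->]]; elim: s Hs => [|ab s IH] Hs.
    exists (fun _ => 0); split => [_|]; first exact: (I0 PI).
    by rewrite big_nil big1 // => j _; rewrite mul0r.
  have [h [Ph Eh]] := IH (fun ab' H => Hs ab' (ltac:(by rewrite inE H orbT))).
  have [Pa Pb] := Hs ab (mem_head _ _).
  have [cf [Rcf Ecf]] := (Hg ab.2).1 Pb.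
  exists (fun j => ab.1 * (if (insub j : option 'I_(size g)) is Some j' then cf j' else 0) + h j).
  split.
    move=> j; apply: (ID PI) => //; apply: (IMr PI) => //.
    by case: insub => [j'|]; [apply: Rcf | apply: R0].
  rewrite big_cons Eh (eq_bigr _ (fun j _ => mulrDl _ _ _)) big_split /=; congr (_ + _).
  rewrite {1}Ecf mulr_sumr; apply: eq_bigr => j _; rewrite valK; ring.
have base : Q (size g).
  exists 1; split; first exact: R1. split; first exact: (M1 HP).
  move=> y Py; have [w [Rw Hw]] := Hpi y Py; have [h [Ph Eh]] := span _ Hw.
  by exists w, h; split => //; split => //; rewrite mul1r -Eh; ring.
have step : forall k, Q k.+1 -> Q k.
  move=> k [t [Rt [Pt Ht]]].
  have [w0 [h0 [Rw0 [Ph0 E0]]]] := Ht _ (Pg' k).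
  rewrite big_ord_recr /= in E0.
  have Rh : forall j, R (h0 j) by move=> j; apply: (IR PI).
  have Ptk : ~ P (t - h0 k).
    move=> H; apply: Pt; have -> : t = (t - h0 k) + h0 k by ring.
    by apply: (ID PI).
  exists (t * (t - h0 k)); split; first by apply: RM => //; apply: RB.
  split; first by case/(Pprime PP Rt (RB Rt (Rh k))).
  move=> y Py; have [w [h [Rw [Ph E]]]] := Ht y Py.
  rewrite big_ord_recr /= in E.
  have Rhh : forall j, R (h j) by move=> j; apply: (IR PI).
  exists ((t - h0 k) * w + h k * w0), (fun j => (t - h0 k) * h j + h k * h0 j).
  split; first by apply: RD; apply: RM => //; apply: RB.
  split; first by move=> j; apply: (ID PI); apply: (IM PI) => //; apply: RB.
  set S := \sum_(i < k) h i * g`_i in E *.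
  set S0 := \sum_(i < k) h0 i * g`_i in E0 *.
  have e : (t - h0 k) * g`_k = pi * w0 + S0 by rewrite mulrBl E0; ring.
  have eS : \sum_(i < k) ((t - h0 k) * h i + h k * h0 i) * g`_i = (t - h0 k) * S + h k * S0.
    by rewrite /S /S0 !mulr_sumr -big_split; apply: eq_bigr => i _ /=; ring.
  rewrite eS.
  have -> : t * (t - h0 k) * y = (t - h0 k) * (t * y) by ring.
  rewrite E.
  have -> : (t - h0 k) * (pi * w + (S + h k * g`_k)) = (t - h0 k) * (pi * w + S) + h k * ((t - h0 k) * g`_k) by ring.
  rewrite e; ring.
have down : forall k, Q k -> Q 0%N.
  by elim=> [//|k IH] /step /IH.
have [t [Rt [Pt Ht]]] := down _ base.
exists t; split => //; split => // y Py.
have [w [h [Rw [_ E]]]] := Ht y Py.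
by exists w; split => //; rewrite E big_ord0 addr0.
Qed.
End Nak.

Section Loc.
Variable P : K -> Prop.
Hypothesis HP : maximal_ideal R P.
Variable pi : K.
Hypothesis Ppi : P pi.
Hypothesis pi0 : pi != 0.
Hypothesis HT : forall y, P y -> exists t w, R t /\ ~ P t /\ R w /\ t * y = pi * w.

Let PI := MI HP.
Let PP := max_prime HP.

Definition Ij (j : nat) (r : K) := R r /\ exists s w, R s /\ ~ P s /\ R w /\ s * r = pi ^+ j * w.

Lemma Ij_ideal j : is_ideal R (Ij j).
Proof.
split; [|split; [|split]].
- by move=> x [].
- split; first exact: R0.
  exists 1, 0; split; first exact: R1. split; first exact: (M1 HP).
  by split; [exact: R0 | rewrite !mulr0].
- move=> x y [Rx [s1 [w1 [Rs1 [Ps1 [Rw1 E1]]]]]] [Ry [s2 [w2 [Rs2 [Ps2 [Rw2 E2]]]]]].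
  split; first exact: RB.
  exists (s1 * s2), (s2 * w1 - s1 * w2); split; first exact: RM.
  split; first by case/(Pprime PP Rs1 Rs2).
  split; first by apply: RB; apply: RM.
  have -> : s1 * s2 * (x - y) = s2 * (s1 * x) - s1 * (s2 * y) by ring.
  by rewrite E1 E2; ring.
- move=> r x Rr [Rx [s [w [Rs [Ps [Rw E]]]]]]; split; first exact: RM.
  exists s, (r * w); split => //; split => //; split; first exact: RM.
  have -> : s * (r * x) = r * (s * x) by ring.
  by rewrite E; ring.
Qed.

Lemma val_bound y : R y -> y != 0 -> exists N, forall k s w, R s -> ~ P s -> R w ->
  s * y = pi ^+ k * w -> (k <= N)%N.
Proof.
move=> Ry y0; have [c [c0 [z [Rz Hz]]]] := divides_nat Ry y0.
have [L [HL C]] := modc_fin c0.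
exists (size L) => k s w Rs Ps Rw E.
have cI : forall j, (j <= k)%N -> Ij j c%:R.
  move=> j jk; split; first exact: Rn.
  exists s, (pi ^+ (k - j) * w * z); split => //; split => //.
  split; first by apply: RM => //; apply: RM => //; apply: RX; exact: (IR PI).
  by rewrite Hz mulrA E -{1}(subnKC jk) exprD; ring.
have pj : forall j, ~ Ij j.+1 (pi ^+ j).
  move=> j [_ [s' [w' [Rs' [Ps' [Rw' E']]]]]]; apply: Ps'.
  have : pi ^+ j * (s' - pi * w') = 0 by rewrite mulrBr mulrC E' exprS; ring.
  move/eqP; rewrite mulf_eq0 expf_eq0 (negbTE pi0) andbF /= subr_eq0 => /eqP ->.
  exact: (IMr PI Rw' Ppi).
have key : forall j, (j <= k)%N -> (count (fun l => dec (Ij j l)) L + j <= size L)%N.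
  elim=> [|j IH] jk; first by rewrite addn0 count_size.
  have jk' : (j <= k)%N by apply: ltnW.
  apply: leq_trans (IH jk'); rewrite addnS ltn_add2r.
  apply: count_strict.
    move=> r /decP [Rr [s' [w' [Rs' [Ps' [Rw' E']]]]]]; apply/decP; split => //.
    by exists s', (pi * w'); split => //; split => //; split; [apply: RM => //; exact: (IR PI) | rewrite E' exprSr; ring].
  have [l [lL [z' [Rz' El]]]] := C (pi ^+ j) (RX _ (IR PI Ppi)).
  exists l; split => //; split.
    apply/decP; have -> : l = pi ^+ j - c%:R * z' by rewrite El; ring.
    apply: (IB (Ij_ideal j)); last by apply: (IMr (Ij_ideal j)) => //; apply: cI.
    split; first by apply: RX; exact: (IR PI).
    exists 1, 1; split; first exact: R1. split; first exact: (M1 HP).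
    by split; [exact: R1 | rewrite mul1r mulr1].
  apply/negP => /decP Hl; apply: (pj j); rewrite El.
  by apply: (ID (Ij_ideal j.+1)) => //; apply: (IMr (Ij_ideal j.+1)) => //; apply: cI.
exact: leq_trans (leq_addl _ _) (key k (leqnn k)).
Qed.

Lemma decomp y : R y -> y != 0 -> exists k s u, R s /\ ~ P s /\ R u /\ ~ P u /\
  s * y = pi ^+ k * u.
Proof.
move=> Ry y0; have [N HN] := val_bound Ry y0.
pose Q k := dec (exists s w, R s /\ ~ P s /\ R w /\ s * y = pi ^+ k * w).
have ex0 : exists k, Q k.
  exists 0%N; apply/decP; exists 1, y; split; first exact: R1.
  by split; [exact: (M1 HP) | split => //; rewrite mul1r expr0 mul1r].
have ub : forall k, Q k -> (k <= N)%N.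
  by move=> k /decP [s [w [Rs [Ps [Rw E]]]]]; apply: (HN k s w).
case: (ex_maxnP ex0 ub) => k /decP [s [w [Rs [Ps [Rw E]]]]] maxk.
exists k, s, w; do 3 split => //; split => //.
move=> Pw; have [t [w' [Rt [Pt [Rw' E']]]]] := HT Pw.
suff : (k.+1 <= k)%N by rewrite ltnn.
apply: maxk; apply/decP; exists (t * s), w'; split; first exact: RM.
split; first by case/(Pprime PP Rt Rs).
split => //; rewrite -mulrA E mulrA [t * _]mulrC -mulrA E' exprSr; ring.
Qed.

Lemma powP w n : R w -> P (w ^+ n) -> P w.
Proof.
move=> Rw; elim: n => [|n IH]; first by rewrite expr0 => /(M1 HP).
by rewrite exprS => /(Pprime PP Rw (RX _ Rw)) [|/IH].
Qed.

Lemma local_int x : in_frac_field R x -> integral_over R x ->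
  exists t, R t /\ ~ P t /\ R (t * x).
Proof.
move=> [a [b [Ra [Rb [b0 ->]]]]] [p [mp [Rp rp]]].
case: (eqVneq a 0) => [->|a0].
  by exists 1; split; [exact: R1 | split; [exact: (M1 HP) | rewrite mul0r mulr0; exact: R0]].
have [j [s2 [u2 [Rs2 [Ps2 [Ru2 [Pu2 Ea]]]]]]] := decomp Ra a0.
have [k [s1 [u1 [Rs1 [Ps1 [Ru1 [Pu1 Eb]]]]]]] := decomp Rb b0.
have Rpi : R pi := IR PI Ppi.
case: (leqP k j) => kj.
  exists (u1 * s2); split; first exact: RM.
  split; first by case/(Pprime PP Ru1 Rs2).
  have -> : u1 * s2 * (a / b) = s1 * pi ^+ (j - k) * u2.
    apply: (mulIf b0).
    have -> : u1 * s2 * (a / b) * b = u1 * (s2 * a) by field.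
    have -> : s1 * pi ^+ (j - k) * u2 * b = pi ^+ (j - k) * u2 * (s1 * b) by ring.
    have ej : pi ^+ j = pi ^+ (j - k) * pi ^+ k by rewrite -exprD subnK.
    by rewrite Ea Eb ej; ring.
  by apply: RM => //; apply: RM => //; apply: RX.
exfalso.
pose e := (k - j)%N.
have e0 : (0 < e)%N by rewrite subn_gt0.
pose D := s2 * u1 * pi ^+ e.
pose w := u2 * s1.
have Pw : ~ P w by case/(Pprime PP Ru2 Rs1).
have Rw : R w by apply: RM.
have pi0' : pi ^+ k != 0 by rewrite expf_eq0 (negbTE pi0) andbF.
have xD : a / b * D = w.
  apply: (mulIf b0); apply: (mulIf pi0').
  have -> : a / b * D * b * pi ^+ k = s2 * a * u1 * pi ^+ e * pi ^+ k by rewrite /D; field.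
  have ek : pi ^+ k = pi ^+ e * pi ^+ j by rewrite -exprD subnK // ltnW.
  rewrite Ea /w.
  have -> : u2 * s1 * b * pi ^+ k = u2 * pi ^+ k * (s1 * b) by ring.
  by rewrite Eb ek; ring.
have PD : P D.
  rewrite /D; apply: (IM PI); first by apply: RM.
  by rewrite -(subnK e0) exprD expr1; apply: (IM PI) => //; apply: RX.
have RD' : R D := IR PI PD.
have sp : size p = (size p).-1.+1 by rewrite prednK // size_poly_gt0 monic_neq0.
set n := (size p).-1 in sp.
have pn : p`_n = 1 by move/monicP: mp; rewrite lead_coefE.
have : D ^+ n * p.[a / b] = 0 by rewrite (rootP rp) mulr0.
rewrite horner_coef sp big_ord_recr /= pn mul1r mulrDr mulr_sumr.
have -> : D ^+ n * (a / b) ^+ n = w ^+ n by rewrite -exprMn mulrC xD.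
move=> /eqP; rewrite addrC addr_eq0 => /eqP Ewn.
apply: Pw; apply: (powP (n:=n) Rw); rewrite Ewn; apply: (IN PI).
apply: (Isum PI) => i _.
have -> : D ^+ n * (p`_i * (a / b) ^+ i) = p`_i * w ^+ i * D ^+ (n - i).
  rewrite -xD [(_ * D) ^+ i]exprMn.
  have -> : D ^+ n = D ^+ i * D ^+ (n - i) by rewrite -exprD subnKC // ltnW.
  ring.
apply: (IM PI); first by apply: RM => //; apply: RX.
have -> : D ^+ (n - i) = D * D ^+ (n - i).-1 by rewrite -exprS prednK // subn_gt0.
by apply: (IMr PI) => //; apply: RX.
Qed.
End Loc.

Lemma exists_max J : is_ideal R J -> ~ J 1 -> (exists y, J y /\ y != 0) ->
  exists P, maximal_ideal R P /\ forall x, J x -> P x.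
Proof.
move=> HJ J1 [y [Jy y0]].
have [c [c0 Jc]] := ideal_int HJ Jy y0.
have [L [HL C]] := modc_fin c0.
pose Q k := dec (exists I, is_ideal R I /\ ~ I 1 /\ (forall x, J x -> I x) /\
   count (fun l => dec (I l)) L = k).
have ex0 : exists k, Q k by exists (count (fun l => dec (J l)) L); apply/decP; exists J.
have ub : forall k, Q k -> (k <= size L)%N.
  by move=> k /decP [I [_ [_ [_ <-]]]]; apply: count_size.
case: (ex_maxnP ex0 ub) => k /decP [I [HI [I1 [JI Ek]]]] maxk.
exists I; split => //; split => //; split => // J' HJ' sub.
case: (classic (J' 1)) => J'1; [by right | left].
move=> x; split; last exact: sub.
move=> J'x; apply: NNPP => Ix.
have : (count (fun l => dec (J' l)) L <= k)%N.
  by apply: maxk; apply/decP; exists J'; split => //; split => //; split => // z /JI /sub.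
rewrite leqNgt => /negP; apply; rewrite -Ek; apply: count_strict.
  by move=> l /decP /sub /decP.
have [l [lL [z [Rz Ex]]]] := C x (IR HJ' J'x).
have Ic : I c%:R by apply: JI.
exists l; split => //; split.
  apply/decP; have -> : l = x - c%:R * z by rewrite Ex; ring.
  by apply: (IB HJ') => //; apply: (IMr HJ') => //; apply: sub.
apply/negP => /decP Il; apply: Ix; rewrite Ex; apply: (ID HI) => //.
by apply: (IMr HI).
Qed.

Lemma int_closed : (forall p : K -> Prop, maximal_ideal R p ->
     forall n m : nat, ideal_index R p n -> ideal_index R (ideal_mul p p) m ->
     (m <= n ^ 2)%N) -> integrally_closed R.
Proof.
move=> Hnorm x Hf Hi; have [a [b [Ra [Rb [b0 Ex]]]]] := Hf.
pose J r := R r /\ R (r * x).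
have HJ : is_ideal R J.
  split; [|split; [|split]].
  - by move=> r [].
  - by split; [exact: R0 | rewrite mul0r; exact: R0].
  - move=> r s [Rr Rrx] [Rs Rsx]; split; first exact: RB.
    by rewrite mulrBl; apply: RB.
  - move=> r s Rr [Rs Rsx]; split; first exact: RM.
    by rewrite -mulrA; apply: RM.
case: (classic (J 1)) => [[_]|J1]; first by rewrite mul1r.
exfalso.
have Jb : J b by split => //; rewrite Ex mulrC divfK.
have [P [HP JP]] := exists_max HJ J1 (ex_intro _ b (conj Jb b0)).
have Pnz : exists x, P x /\ x != 0 by exists b; split => //; apply: JP.
have [pi [Ppi Hpi]] := exists_pi HP (Hnorm P HP) Pnz.
have [t [Rt [Pt Ht]]] := nakayama HP Ppi Hpi.
have pi0 : pi != 0.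
  apply/negP => /eqP p0; have [w [Rw Ew]] := Ht b (JP b Jb).
  move: Ew; rewrite p0 mul0r => /eqP; rewrite mulf_eq0 (negbTE b0) orbF => /eqP t0.
  by apply: Pt; rewrite t0; apply: (I0 (MI HP)).
have HT : forall y, P y -> exists t w, R t /\ ~ P t /\ R w /\ t * y = pi * w.
  by move=> y Py; have [w [Rw Ew]] := Ht y Py; exists t, w.
have [t' [Rt' [Pt' Rtx]]] := local_int HP Ppi pi0 HT Hf Hi.
by apply: Pt'; apply: JP.
Qed.
End Basics.

Theorem corollary2p8 (K : fieldExtType rat) (R : K -> Prop)
  (HR : is_subring R)
  (Hnorm : forall p : K -> Prop, maximal_ideal R p ->
     forall n m : nat, ideal_index R p n -> ideal_index R (ideal_mul p p) m ->
     (m <= n ^ 2)%N) :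
  dedekind_domain R.
Proof.
split; first exact: noeth HR.
split; first exact: int_closed HR Hnorm.
move=> P HP Pnz; exact: (prime_maximal HR HP Pnz).
Qed.
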